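(* For every positively weighted finite graph $(G,w)$, every vertex $v$ of $G$ and every natural number $r\ge 1$, $$\lambda_1(G(v,r),w)\ge \lambda_1(\widetilde{G}(v,r),w).$$
   Context: A weighted graph $(G,w)$ is a simple graph with $w\colon E(G)\to\mathbb{R}^+$; subgraphs inherit the restricted weight. The ball $G(v,r)$ is the subgraph of $G$ induced on the vertices at distance at most $r$ from $v$. A non-backtracking walk is a walk $(v_0,v_1,\dots)$ with $v_i\ne v_{i+2}$ for all $i$. The unraveled ball $\widetilde{G}(v,r)$ is the graph whose vertices are the non-backtracking walks in $G$ of length at most $r$ starting at $v$, two walks adjacent iff one is a one-step extension of the other, with the edge between $(v_0,\dots,v_{i-1})$ and $(v_0,\dots,v_i)$ weighted $w(v_{i-1}v_i)$. $\lambda_1(H,w)$ denotes the spectral radius of the weighted adjacency matrix of $(H,w)$ (entry $w(uv)$ if $uv$ is an edge, $0$ otherwise). *)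

(* Defs.v *)
From HB Require Import structures.
From mathcomp Require Import all_boot all_order all_algebra.
From mathcomp Require Import complex.
From mathcomp Require Import reals.

Set Implicit Arguments.
Unset Strict Implicit.
Unset Printing Implicit Defensive.

Import Order.TTheory GRing.Theory Num.Theory.
Local Open Scope ring_scope.

Definition simple_graph (T : finType) (e : rel T) : Prop :=
  symmetric e /\ irreflexive e.

(* A positive weighting of the edges of (T, e): a symmetric function
   w : T -> T -> R whose values on edges are positive (values on
   non-edges are irrelevant). *)
Definition pos_weight (R : realType) (T : finType) (e : rel T)
  (w : T -> T -> R) : Prop :=
  (forall x y, w x y = w y x) /\ (forall x y, e x y -> 0 < w x y).

(* Spectral radius of a real square matrix: the maximum modulus of its
   complex eigenvalues (the roots, with multiplicity, of its
   characteristic polynomial over R[i]). *)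
Definition spectral_radius (R : realType) (n : nat) (A : 'M[R]_n) : R :=
  \big[Num.max/0]_(z <- sval (closed_field_poly_normal
                          (char_poly (map_mx (real_complex R) A))))
     ComplexField.Normc.normc z.

(* The weighted adjacency matrix of the weighted graph whose vertices are
   the (distinct) entries of the list s, with weighted adjacency W
   (W x y = weight of xy if xy is an edge, 0 otherwise). *)
Definition wadj_mx (R : realType) (V : eqType) (x0 : V) (s : seq V)
  (W : V -> V -> R) : 'M[R]_(size s) :=
  \matrix_(i < size s, j < size s) W (nth x0 s i) (nth x0 s j).

Definition lambda1 (R : realType) (V : eqType) (x0 : V) (s : seq V)
  (W : V -> V -> R) : R := spectral_radius (wadj_mx x0 s W).

Definition seqs_of_size (T : finType) (k : nat) : seq (seq T) :=
  [seq tval t | t : k.-tuple T].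

Definition is_walk (T : finType) (e : rel T) (v : T) (p : seq T) : bool :=
  if p is x :: q then (x == v) && path e x q else false.

Definition non_backtracking (T : finType) (v : T) (p : seq T) : bool :=
  [forall i : 'I_(size p), (i.+2 < size p)%N ==> (nth v p i != nth v p i.+2)].

(* All walks from v of length (number of edges) at most r. *)
Definition walks_le (T : finType) (e : rel T) (v : T) (r : nat) : seq (seq T) :=
  flatten [seq [seq p <- seqs_of_size T k.+1 | is_walk e v p] | k <- iota 0 r.+1].

Definition nb_walks_le (T : finType) (e : rel T) (v : T) (r : nat) : seq (seq T) :=
  [seq p <- walks_le e v r | non_backtracking v p].

(* Vertices at distance at most r from v: endpoints of walks from v of
   length at most r. *)
Definition ball_set (T : finType) (e : rel T) (v : T) (r : nat) : {set T} :=
  [set x | has (fun p => last v p == x) (walks_le e v r)].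

(* lambda_1 of the ball G(v,r): the subgraph induced on ball_set,
   with the restricted weight. *)
Definition lambda1_ball (R : realType) (T : finType) (e : rel T)
  (w : T -> T -> R) (v : T) (r : nat) : R :=
  lambda1 v (enum (ball_set e v r)) (fun x y => if e x y then w x y else 0).

(* Weighted adjacency of the unraveled ball: walks p, q are adjacent iff
   one is a one-step extension of the other; the edge between
   (v_0..v_{i-1}) and (v_0..v_i) has weight w(v_{i-1} v_i). *)
Definition unravel_adj (R : realType) (T : finType) (w : T -> T -> R) (v : T)
  (p q : seq T) : R :=
  if (q == rcons p (last v q)) || (p == rcons q (last v p))
  then w (last v p) (last v q) else 0.

Definition lambda1_unraveled (R : realType) (T : finType) (e : rel T)
  (w : T -> T -> R) (v : T) (r : nat) : R :=
  lambda1 [:: v] (nb_walks_le e v r) (unravel_adj w v).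

(* Main.v *)
Require Import Defs.
From HB Require Import structures.
From mathcomp Require Import all_boot all_order all_algebra.
From mathcomp Require Import complex.
From mathcomp Require Import reals.
From mathcomp Require Import spectral sesquilinear.
From mathcomp Require Import ring lra.
Import Order.TTheory GRing.Theory Num.Theory.
Local Open Scope ring_scope.

Module Aux.
Set Implicit Arguments. Unset Strict Implicit.
Section S.
Local Open Scope complex_scope.
Local Open Scope sesquilinear_scope.
Variable R : realType.
Local Notation C := (R[i]).
Local Notation normc := (@ComplexField.Normc.normc R).

Definition quad n (A : 'M[R]_n) (f : 'I_n -> R) :=
  \sum_i \sum_j f i * A i j * f j.

Lemma bigmax_ge (s : seq C) z : z \in s ->
  normc z <= \big[Num.max/0]_(y <- s) normc y.
Proof.
elim: s => // a s IH; rewrite in_cons big_cons le_max => /orP[/eqP->|/IH->];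
  by rewrite ?lexx ?orbT.
Qed.

Lemma root_in_specrad n (A : 'M[R]_n) (z : C) :
  root (char_poly (map_mx (real_complex R) A)) z ->
  normc z <= spectral_radius A.
Proof.
rewrite /spectral_radius; case: closed_field_poly_normal => s /= E.
move=> rz; apply: bigmax_ge; move: rz; rewrite E rootZ ?root_prod_XsubC //.
by rewrite lead_coef_eq0 -size_poly_eq0 size_char_poly.
Qed.

Lemma quad_le_specrad n (B : 'M[R]_n) (g : 'I_n -> R) : B^T = B ->
  quad B g <= spectral_radius B * \sum_i g i ^+ 2.
Proof.
move=> Bsym.
set Bc := map_mx (real_complex R) B.
have herm : Bc \is hermsymmx.
  apply/is_hermitianmxP; rewrite expr0 scale1r; apply/matrixP => i j.
  have cr (x : R) : Num.conj (x%:C : C) = x%:C := conjc_real x.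
  by rewrite !mxE cr -[in LHS]Bsym mxE.
have /orthomx_spectralP E := hermitian_normalmx herm.
set P := spectralmx Bc in E; set d := spectral_diag Bc in E.
have PU : P \is unitarymx := spectral_unitarymx Bc.
have PPt : P *m P^t* = 1%:M by apply/unitarymxP.
have PtP : P^t* *m P = 1%:M by rewrite -invmx_unitary // mulVmx // unitarymx_unit.
rewrite invmx_unitary // in E.
have dspec k : normc (d 0 k) <= spectral_radius B.
  apply: root_in_specrad; rewrite -eigenvalue_root_char; apply/eigenvalueP.
  exists (row k P).
    have : P *m Bc = diag_mx d *m P by rewrite E !mulmxA PPt mul1mx.
    by move/(congr1 (row k)); rewrite !row_mul row_diag_mx -scalemxAl -rowE.
  apply/eqP => /(congr1 (mulmx ^~ (P^t*))); rewrite -row_mul PPt mul0mx.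
  move/rowP/(_ k); rewrite !mxE eqxx /= => /eqP; by rewrite oner_eq0.
have cr (x : R) : Num.conj (x%:C : C) = x%:C := conjc_real x.
set u : 'rV[C]_n := \row_i (g i)%:C.
set v := u *m P^t*.
have vt : v^t* = P *m u^t*.
  by rewrite /v trmx_mul map_mxM trmxCK.
have C1 : (u *m Bc *m u^t*) 0 0 = (quad B g)%:C.
  rewrite /quad exchange_big rmorph_sum /= mxE; apply: eq_bigr => j _.
  rewrite mxE big_distrl rmorph_sum; apply: eq_bigr => i _.
  by rewrite !mxE cr !rmorphM.
have C2 : u *m Bc *m u^t* = v *m diag_mx d *m v^t*.
  by rewrite vt E /v !mulmxA.
have C3 : (v *m diag_mx d *m v^t*) 0 0 = \sum_k d 0 k * `|v 0 k| ^+ 2.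
  rewrite mxE; apply: eq_bigr => k _.
  by rewrite mul_mx_diag !mxE normCK mulrAC mulrC.
have C4 : \sum_k `|v 0 k| ^+ 2 = (\sum_i g i ^+ 2)%:C.
  have -> : \sum_k `|v 0 k| ^+ 2 = (v *m v^t*) 0 0.
    by rewrite mxE; apply: eq_bigr => k _; rewrite !mxE normCK.
  rewrite vt /v mulmxA -(mulmxA u) PtP mulmx1 mxE rmorph_sum.
  by apply: eq_bigr => i _; rewrite !mxE cr rmorphXn.
rewrite -lecR.
have -> : (spectral_radius B * \sum_i g i ^+ 2)%:C =
  (spectral_radius B)%:C * (\sum_i g i ^+ 2)%:C by rewrite rmorphM.
rewrite -C4 mulr_sumr -C1 C2 C3.
apply: le_trans (real_ler_norm _) _.
  by rewrite -C3 -C2 C1; apply/complex_realP; eexists.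
apply: le_trans (ler_norm_sum _ _ _) _; apply: ler_sum => k _.
rewrite normrM [X in _ * X]ger0_norm ?exprn_ge0 ?normr_ge0 //.
rewrite ler_wpM2r ?exprn_ge0 ?normr_ge0 //.
by change ((normc (d 0 k))%:C <= (spectral_radius B)%:C); rewrite lecR.
Qed.

Lemma bigmax_le (s : seq C) c : 0 <= c -> (forall z, z \in s -> normc z <= c) ->
  \big[Num.max/0]_(y <- s) normc y <= c.
Proof.
move=> c0; elim: s => [|a s IH] H; first by rewrite big_nil.
rewrite big_cons ge_max H ?mem_head //= IH // => z zs.
by apply: H; rewrite in_cons zs orbT.
Qed.

Lemma normc_ge0 (x : C) : 0 <= normc x.
Proof. by rewrite -ler0c; exact: (normr_ge0 x). Qed.

Lemma specrad_le n (A : 'M[R]_n) c : 0 <= c -> (forall i j, 0 <= A i j) ->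
  (forall f : 'I_n -> R, (forall i, 0 <= f i) -> quad A f <= c * \sum_i f i ^+ 2) ->
  spectral_radius A <= c.
Proof.
move=> c0 Apos Hq; rewrite /spectral_radius; case: closed_field_poly_normal => s E /=.
apply: bigmax_le => // z zs.
have : root (char_poly (map_mx (real_complex R) A)) z.
  by rewrite E rootZ ?root_prod_XsubC // lead_coef_eq0 -size_poly_eq0 size_char_poly.
rewrite -eigenvalue_root_char => /eigenvalueP [u uE u0].
pose f i := normc (u 0 i).
have f0 i : 0 <= f i by apply: normc_ge0.
have Hj j : normc z * f j <= \sum_i f i * A i j.
  rewrite -lecR rmorphM rmorph_sum.
  have -> : (normc z)%:C * (f j)%:C = `|(u *m map_mx (real_complex R) A) 0 j|.
    by rewrite uE mxE normrM.
  rewrite mxE; apply: le_trans (ler_norm_sum _ _ _) _; apply: ler_sum => i _.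
  by rewrite normrM rmorphM mxE [X in _ * X]ger0_norm // ler0c.
have Hs : normc z * \sum_i f i ^+ 2 <= quad A f.
  rewrite /quad exchange_big /= mulr_sumr; apply: ler_sum => j _.
  rewrite -big_distrl /= expr2 mulrA ler_wpM2r //.
have [j uj] : exists j, u 0 j != 0.
  apply/existsP; apply: contraR u0 => /existsPn H; apply/eqP/rowP => j.
  by rewrite mxE; apply/eqP; rewrite -[_ == _]negbK H.
have fpos : 0 < \sum_i f i ^+ 2.
  rewrite (bigD1 j) //=; apply: (@lt_le_trans _ _ (f j ^+ 2)).
    rewrite exprn_gt0 // lt_def f0 andbT; apply: contra uj => /eqP.
    by move/ComplexField.Normc.eq0_normc => ->.
  by rewrite lerDl sumr_ge0 // => i _; rewrite exprn_ge0.
by rewrite -(ler_pM2r fpos); apply: le_trans Hs (Hq f f0).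
Qed.
End S.
Section G.
Variable R : realType.

Lemma count_le1 (I : eqType) (a : pred I) (s : seq I) : uniq s ->
  (forall x y, x \in s -> y \in s -> a x -> a y -> x = y) -> (count a s <= 1)%N.
Proof.
move=> us H; rewrite -size_filter.
have sub : forall x, x \in filter a s -> {subset filter a s <= [:: x]}.
  move=> x; rewrite mem_filter => /andP[ax xs] y; rewrite mem_filter inE.
  by case/andP => ay ys; apply/eqP; apply: H.
case E: (filter a s) => [|x t] //.
have := uniq_leq_size (filter_uniq a us) (sub x _).
by rewrite E mem_head /= => /(_ isT).
Qed.

Lemma term_le_sum (I : eqType) (s : seq I) (F : I -> R) x :
  (forall i, 0 <= F i) -> x \in s -> F x <= \sum_(i <- s) F i.
Proof.
move=> F0; elim: s => // a s IH; rewrite in_cons big_cons => /orP[/eqP->|/IH H].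
  by rewrite lerDl sumr_ge0.
by apply: le_trans H _; rewrite lerDr.
Qed.

Lemma sum_if_count (I : eqType) (s : seq I) (a : pred I) :
  \sum_(i <- s) (if a i then 1 else 0 : R) = (count a s)%:R.
Proof.
elim: s => [|x s IH]; first by rewrite big_nil.
by rewrite big_cons IH /=; case: (a x); rewrite ?add0r // natrD addrC.
Qed.

Lemma cs_match (I : eqType) (s : seq I) (phi : I -> R) (P Q : pred I)
    (adj : I -> I -> bool) :
  (forall p, 0 <= phi p) ->
  (forall p, p \in s -> (count (fun q => Q q && adj p q) s <= 1)%N) ->
  (forall q, q \in s -> (count (fun p => P p && adj p q) s <= 1)%N) ->
  \sum_(p <- s) \sum_(q <- s) (if P p && Q q && adj p q then phi p * phi q else 0)
  <= Num.sqrt (\sum_(p <- s | P p) phi p ^+ 2) *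
     Num.sqrt (\sum_(q <- s | Q q) phi q ^+ 2).
Proof.
move=> phi0 cP cQ.
set X := \sum_(p <- s | P p) phi p ^+ 2; set Y := \sum_(q <- s | Q q) phi q ^+ 2.
have X0 : 0 <= X by apply: sumr_ge0 => i _; rewrite exprn_ge0.
have Y0 : 0 <= Y by apply: sumr_ge0 => i _; rewrite exprn_ge0.
set a := Num.sqrt X; set b := Num.sqrt Y.
set M := \sum_(p <- s) _.
have a0 : 0 <= a by apply: sqrtr_ge0.
have b0 : 0 <= b by apply: sqrtr_ge0.
have zeroP : a = 0 -> M = 0.
  move=> /eqP; rewrite sqrtr_eq0 => Xle.
  have Xz : X = 0 by apply/le_anti; rewrite Xle X0.
  rewrite /M big_seq; apply: big1 => p ps; apply: big1 => q _.
  case: ifP => // /andP[/andP[Pp _] _].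
  have : phi p ^+ 2 <= X.
    rewrite /X big_mkcond /=; apply: (@le_trans _ _ (if P p then phi p ^+ 2 else 0)).
      by rewrite Pp.
    by apply: (@term_le_sum _ s (fun i => if P i then phi i ^+ 2 else 0)) => // i; case: ifP => //; rewrite exprn_ge0.
  rewrite Xz => H; have /eqP : phi p ^+ 2 = 0 by apply/le_anti; rewrite H exprn_ge0.
  by rewrite expf_eq0 /= => /eqP->; rewrite mul0r.
have zeroQ : b = 0 -> M = 0.
  move=> /eqP; rewrite sqrtr_eq0 => Yle.
  have Yz : Y = 0 by apply/le_anti; rewrite Yle Y0.
  rewrite /M; apply: big1 => p _; rewrite big_seq; apply: big1 => q qs.
  case: ifP => // /andP[/andP[_ Qq] _].
  have : phi q ^+ 2 <= Y.
    rewrite /Y big_mkcond /=; apply: (@le_trans _ _ (if Q q then phi q ^+ 2 else 0)).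
      by rewrite Qq.
    by apply: (@term_le_sum _ s (fun i => if Q i then phi i ^+ 2 else 0)) => // i; case: ifP => //; rewrite exprn_ge0.
  rewrite Yz => H; have /eqP : phi q ^+ 2 = 0 by apply/le_anti; rewrite H exprn_ge0.
  by rewrite expf_eq0 /= => /eqP->; rewrite mulr0.
have [az|ap] := eqVneq a 0; first by rewrite zeroP // az mul0r.
have [bz|bp] := eqVneq b 0; first by rewrite zeroQ // bz mulr0.
have abp : 0 < a * b by rewrite mulr_gt0 // lt_def ?ap ?bp.
have SX : \sum_(p <- s) \sum_(q <- s) (if P p && Q q && adj p q then phi p ^+ 2 else 0) <= X.
  rewrite /X [Z in _ <= Z]big_mkcond /= big_seq [Z in _ <= Z]big_seq; apply: ler_sum => p ps.
  case: (boolP (P p)) => Pp /=; last by rewrite big1.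
  rewrite -[Z in _ <= Z]mulr1.
  have -> : \sum_(q <- s) (if Q q && adj p q then phi p ^+ 2 else 0) =
     phi p ^+ 2 * \sum_(q <- s) (if Q q && adj p q then 1 else 0).
    by rewrite mulr_sumr; apply: eq_bigr => q _; case: ifP; rewrite ?mulr1 ?mulr0.
  by rewrite sum_if_count ler_wpM2l ?exprn_ge0 // lern1 cP.
have SY : \sum_(p <- s) \sum_(q <- s) (if P p && Q q && adj p q then phi q ^+ 2 else 0) <= Y.
  rewrite exchange_big /= /Y [Z in _ <= Z]big_mkcond /= big_seq [Z in _ <= Z]big_seq; apply: ler_sum => q qs.
  case: (boolP (Q q)) => Qq /=; last by rewrite big1 // => p _; rewrite andbF.
  rewrite -[Z in _ <= Z]mulr1.
  have -> : \sum_(p <- s) (if P p && true && adj p q then phi q ^+ 2 else 0) =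
     phi q ^+ 2 * \sum_(p <- s) (if P p && adj p q then 1 else 0).
    by rewrite mulr_sumr; apply: eq_bigr => p _; rewrite andbT; case: ifP; rewrite ?mulr1 ?mulr0.
  by rewrite sum_if_count ler_wpM2l ?exprn_ge0 // lern1 cQ.
set SXs := \sum_(p <- s) \sum_(q <- s) (if P p && Q q && adj p q then phi p ^+ 2 else 0) in SX.
set SYs := \sum_(p <- s) \sum_(q <- s) (if P p && Q q && adj p q then phi q ^+ 2 else 0) in SY.
have E1 : 2 * (a * b * M) = \sum_(p <- s) \sum_(q <- s)
    (if P p && Q q && adj p q then 2 * (a * b) * (phi p * phi q) else 0).
  rewrite /M !mulr_sumr; apply: eq_bigr => p _; rewrite !mulr_sumr.
  by apply: eq_bigr => q _; case: ifP => _; rewrite ?mulr0 // mulrA.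
have E2 : b ^+ 2 * SXs + a ^+ 2 * SYs = \sum_(p <- s) \sum_(q <- s)
    (if P p && Q q && adj p q then b ^+ 2 * phi p ^+ 2 + a ^+ 2 * phi q ^+ 2 else 0).
  rewrite /SXs /SYs !mulr_sumr -big_split; apply: eq_bigr => p _ /=.
  rewrite !mulr_sumr -big_split; apply: eq_bigr => q _ /=.
  by case: ifP => _; rewrite ?mulr0 ?addr0.
have Xa : X = a ^+ 2 by rewrite sqr_sqrtr.
have Yb : Y = b ^+ 2 by rewrite sqr_sqrtr.
have key : 2 * (a * b * M) <= 2 * (a * b * (a * b)).
  rewrite E1; apply: (@le_trans _ _ (b ^+ 2 * SXs + a ^+ 2 * SYs)).
    rewrite E2; apply: ler_sum => p _; apply: ler_sum => q _.
    case: ifP => _ //.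
    have h := sqr_ge0 (b * phi p - a * phi q).
    rewrite -subr_ge0; apply: le_trans h _; rewrite le_eqVlt; apply/orP; left; apply/eqP.
    rewrite !expr2; ring.
  apply: (@le_trans _ _ (b ^+ 2 * X + a ^+ 2 * Y)).
    by apply: lerD; apply: ler_wpM2l; rewrite ?exprn_ge0.
  rewrite Xa Yb le_eqVlt; apply/orP; left; apply/eqP; rewrite !expr2; ring.
move: key; rewrite ler_pM2l ?ltr0n // ler_pM2l //.
Qed.
End G.
Section W.
Variable T : finType.
Variable e : rel T.
Variable v : T.
Variable r : nat.
Hypothesis esym : symmetric e.

Local Notation W := (nb_walks_le e v r).
Definition adjw (p q : seq T) :=
  (q == rcons p (last v q)) || (p == rcons q (last v p)).

Lemma adjwC p q : adjw p q = adjw q p.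
Proof. by rewrite /adjw orbC. Qed.

Lemma memW p : p \in W -> [/\ is_walk e v p, non_backtracking v p & p \in walks_le e v r].
Proof.
rewrite mem_filter => /andP[nb pw]; split => //.
move: pw; rewrite /walks_le => /flatten_mapP [k _]; by rewrite mem_filter => /andP[].
Qed.

Lemma W_cons p : p \in W -> exists p', p = v :: p'.
Proof. by case/memW; case: p => //= a p' /andP[/eqP-> _]; exists p'. Qed.

Lemma walk_rcons p z : p != [::] -> is_walk e v (rcons p z) -> e (last v p) z.
Proof.
case: p => //= a p' _ /andP[_]; by rewrite rcons_path => /andP[].
Qed.

Lemma adj_edge p q : p \in W -> q \in W -> adjw p q -> e (last v p) (last v q).
Proof.
move=> pW qW /orP[/eqP qE|/eqP pE].
  have [p' pp'] := W_cons pW.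
  case/memW: qW => wq _ _; rewrite qE in wq; apply: walk_rcons wq; by rewrite pp'.
have [q' qq'] := W_cons qW.
case/memW: pW => wp _ _; rewrite pE in wp; rewrite esym pE last_rcons.
by apply: walk_rcons wp; rewrite qq'.
Qed.

Lemma nb_contra q x y : q != [::] -> last v q = y ->
  ~~ non_backtracking v (rcons (rcons q x) y).
Proof.
move=> q0 ly; apply/negP => /forallP.
have lt : ((size q).-1 < size (rcons (rcons q x) y))%N.
  by rewrite !size_rcons ltnS (leq_trans (leq_pred _) (leqnSn _)).
move/(_ (Ordinal lt)) => /=; rewrite !size_rcons.
have sq : (0 < size q)%N by rewrite lt0n size_eq0.
rewrite prednK // ltnSn /= !nth_rcons size_rcons ltnn eqxx.
have l1 : ((size q).-1 < size q)%N by rewrite ltn_predL.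
rewrite l1 (ltn_trans l1 (ltnSn _)) nth_last ly.
by rewrite eqxx.
Qed.

Lemma mixed p q1 q2 x y : q1 \in W -> q2 \in W -> q1 = rcons p y ->
  p = rcons q2 x -> last v q2 = y -> False.
Proof.
move=> q1W q2W E1 E2 ly; case/memW: q1W => _ nb _.
have [q' qq'] := W_cons q2W.
have q20 : q2 != [::] by rewrite qq'.
by have := nb_contra x q20 ly; rewrite -E2 -E1 nb.
Qed.

Lemma uniq_seqs k : uniq (seqs_of_size T k).
Proof. by rewrite /seqs_of_size map_inj_uniq ?enum_uniq //; exact: val_inj. Qed.

Lemma size_seqs k p : p \in seqs_of_size T k -> size p = k.
Proof. by case/mapP => t _ ->; rewrite size_tuple. Qed.

Lemma uniq_flat (L : nat -> seq (seq T)) (ks : seq nat) : uniq ks ->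
  (forall k, uniq (L k)) -> (forall k p, p \in L k -> size p = k.+1) ->
  uniq (flatten [seq L k | k <- ks]).
Proof.
move=> + uL sL; elim: ks => //= k ks IH /andP[kn uks].
rewrite cat_uniq uL IH // andbT; apply/hasPn => p /flatten_mapP [k' k's pk'].
apply/negP => pk; move: kn; have := sL _ _ pk; rewrite (sL _ _ pk') => -[<-].
by rewrite k's.
Qed.

Lemma uniq_walks : uniq (walks_le e v r).
Proof.
apply: uniq_flat; first exact: iota_uniq.
  by move=> k; rewrite filter_uniq // uniq_seqs.
by move=> k p; rewrite mem_filter => /andP[_ /size_seqs].
Qed.

Lemma uniqW : uniq W.
Proof. by rewrite filter_uniq // uniq_walks. Qed.

Lemma countW p y : p \in W -> (count (fun q => (last v q == y) && adjw p q) W <= 1)%N.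
Proof.
move=> pW; apply: count_le1 uniqW _ => q1 q2 q1W q2W /andP[/eqP l1 a1] /andP[/eqP l2 a2].
case/orP: a1 => /eqP E1; case/orP: a2 => /eqP E2.
- by rewrite E1 E2 l1 l2.
- by case: (mixed q1W q2W (_ : q1 = rcons p y) E2 l2); rewrite E1 l1.
- by case: (mixed q2W q1W (_ : q2 = rcons p y) E1 l1); rewrite E2 l2.
- by move: E1; rewrite E2 => /rcons_inj [].
Qed.

Lemma lastball p : p \in W -> last v p \in ball_set e v r.
Proof. by case/memW => _ _ pw; rewrite inE; apply/hasP; exists p. Qed.
End W.

Lemma specrad_ge0 (R : realType) n (A : 'M[R]_n) : 0 <= spectral_radius A.
Proof.
rewrite /spectral_radius; case: closed_field_poly_normal => s _ /=.
elim: s => [|a s IH]; first by rewrite big_nil.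
by rewrite big_cons le_max IH orbT.
Qed.

Lemma sum_last (R : realType) (T : finType) (A : {set T}) (t : T) (F : T -> R) :
  t \in A -> \sum_(x in A) (if t == x then F x else 0) = F t.
Proof.
move=> tA; rewrite (bigD1 t) //= eqxx big1 ?addr0 // => x /andP[_ /negbTE].
by rewrite eq_sym => ->.
Qed.

End Aux.
Import Aux.

Theorem lemma4p2 (R : realType) (T : finType) (e : rel T) (w : T -> T -> R)
  (v : T) (r : nat) :
  simple_graph e -> pos_weight e w -> (1 <= r)%N ->
  lambda1_unraveled e w v r <= lambda1_ball e w v r.
Proof.
move=> [esym eirr] [wsym wpos] _.
rewrite /lambda1_unraveled /lambda1_ball /lambda1.
set W := nb_walks_le e v r.
set A := ball_set e v r.
set S := enum A.
set Bw := fun x y => if e x y then w x y else 0.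
set B := wadj_mx v S Bw.
have uW : uniq W := uniqW e v r.
apply: specrad_le; first exact: specrad_ge0.
  move=> i j; rewrite mxE /unravel_adj; case: ifP => // adj.
  have := adj_edge esym (mem_nth [::v] (ltn_ord i)) (mem_nth [::v] (ltn_ord j)) adj.
  by move/wpos/ltW.
move=> f f0.
pose phi p := \sum_(i < size W | nth [::v] W i == p) f i.
have hphi (i : 'I_(size W)) : phi (nth [::v] W i) = f i.
  rewrite /phi (bigD1 i) //= big1 ?addr0 // => j /andP[/eqP nij ji].
  by move: ji; rewrite -(inj_eq val_inj) /= -(nth_uniq [::v] _ _ uW) ?nij ?eqxx.
have phi0 p : 0 <= phi p by apply: sumr_ge0.
pose gam x := Num.sqrt (\sum_(p <- W | last v p == x) phi p ^+ 2).
pose g (k : 'I_(size S)) := gam (nth v S k).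
have Step1 : quad (wadj_mx [:: v] W (unravel_adj w v)) f =
    \sum_(p <- W) \sum_(q <- W) phi p * unravel_adj w v p q * phi q.
  rewrite (big_nth [::v]) big_mkord; apply: eq_bigr => i _.
  rewrite (big_nth [::v]) big_mkord; apply: eq_bigr => j _.
  by rewrite mxE !hphi.
have Step2 : \sum_k g k ^+ 2 = \sum_(p <- W) phi p ^+ 2.
  have -> : \sum_k g k ^+ 2 = \sum_(x <- S) gam x ^+ 2 by rewrite (big_nth v) big_mkord.
  rewrite /S big_enum /= /gam.
  rewrite (eq_bigr (fun x => \sum_(p <- W) (if last v p == x then phi p ^+ 2 else 0))); last first.
    move=> x _; rewrite sqr_sqrtr; first by rewrite big_mkcond.
    by apply: sumr_ge0 => p _; rewrite exprn_ge0.
  rewrite exchange_big /= big_seq [in RHS]big_seq; apply: eq_bigr => p pW.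
  by rewrite (sum_last (fun _ => phi p ^+ 2)) // lastball.
have Step3 : quad B g = \sum_(x in A) \sum_(y in A) gam x * Bw x y * gam y.
  rewrite /quad -[RHS]big_enum /= -/S [RHS](big_nth v) big_mkord; apply: eq_bigr => k _.
  rewrite -[RHS]big_enum /= -/S [RHS](big_nth v) big_mkord; apply: eq_bigr => l _.
  by rewrite mxE.
have Bsym : B^T = B by apply/matrixP => i j; rewrite !mxE /Bw esym wsym.
have Step0 : \sum_i f i ^+ 2 = \sum_(p <- W) phi p ^+ 2.
  by rewrite (big_nth [::v]) big_mkord; apply: eq_bigr => i _; rewrite hphi.
have Step4 : \sum_(p <- W) \sum_(q <- W) phi p * unravel_adj w v p q * phi q <=
    \sum_(x in A) \sum_(y in A) gam x * Bw x y * gam y.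
  apply: (@le_trans _ _ (\sum_(x in A) \sum_(y in A) \sum_(p <- W) \sum_(q <- W)
     (if (last v p == x) && (last v q == y) then phi p * unravel_adj w v p q * phi q else 0))).
    rewrite le_eqVlt; apply/orP; left; apply/eqP.
    have -> : \sum_(p <- W) \sum_(q <- W) phi p * unravel_adj w v p q * phi q =
      \sum_(p <- W) \sum_(q <- W) \sum_(x in A) \sum_(y in A)
     (if (last v p == x) && (last v q == y) then phi p * unravel_adj w v p q * phi q else 0).
      rewrite big_seq [RHS]big_seq; apply: eq_bigr => p pW.
      rewrite big_seq [RHS]big_seq; apply: eq_bigr => q qW.
      rewrite (eq_bigr (fun x => if last v p == x then \sum_(y in A)
          (if last v q == y then phi p * unravel_adj w v p q * phi q else 0) else 0)); last first.
        by move=> x _; case: (last v p == x) => //=; rewrite big1.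
      rewrite (sum_last (fun _ => \sum_(y in A)
          (if last v q == y then phi p * unravel_adj w v p q * phi q else 0))) ?lastball //.
      by rewrite (sum_last (fun _ => phi p * unravel_adj w v p q * phi q)) ?lastball.
    under eq_bigr => p _ do rewrite exchange_big.
    rewrite exchange_big.
    under eq_bigr => x _ do under eq_bigr => p _ do rewrite exchange_big.
    under eq_bigr => x _ do rewrite exchange_big.
    by [].
  apply: ler_sum => x xA; apply: ler_sum => y yA.
  have [exy|nexy] := boolP (e x y); last first.
    rewrite /Bw (negbTE nexy) mulr0 mul0r big_seq big1 // => p pW.
    rewrite big_seq big1 // => q qW.
    case: ifP => // /andP[/eqP lp /eqP lq]; rewrite /unravel_adj; case: ifP => adj.
      by have := adj_edge esym pW qW adj; rewrite lp lq (negbTE nexy).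
    by rewrite mulr0 mul0r.
  have -> : \sum_(p <- W) \sum_(q <- W)
     (if (last v p == x) && (last v q == y) then phi p * unravel_adj w v p q * phi q else 0)
     = w x y * \sum_(p <- W) \sum_(q <- W)
     (if (last v p == x) && (last v q == y) && adjw v p q then phi p * phi q else 0).
    rewrite mulr_sumr; apply: eq_bigr => p _; rewrite mulr_sumr; apply: eq_bigr => q _.
    case: (boolP ((last v p == x) && (last v q == y))) => [/andP[/eqP lp /eqP lq]|H] /=; last first.
      by rewrite mulr0.
    rewrite /unravel_adj /adjw; case: ifP => _; last by rewrite !mulr0 mul0r.
    by rewrite lp lq mulrAC mulrC.
  apply: (le_trans (ler_wpM2l (ltW (wpos _ _ exy)) (cs_match (s := W) (phi := phi)
      (P := fun p => last v p == x) (Q := fun q => last v q == y) (adj := adjw v) phi0 _ _))).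
  - by move=> p pW; exact: countW.
  - move=> q qW; rewrite (eq_count (a2 := fun p => (last v p == x) && adjw v q p)).
      exact: countW.
    by move=> p; rewrite /= adjwC.
  by rewrite /Bw exy /gam mulrCA mulrA.
rewrite Step1 Step0 -Step2; apply: le_trans Step4 _; rewrite -Step3.
exact: quad_le_specrad.
Qed.
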